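(* Let $k$ be a field of characteristic $2$. There exists a nontrivial action of $\mathbb{G}_{m,k}$ on $\mathcal{E}$ by group automorphisms such that the semi-direct product $\mathcal{E}\rtimes\mathbb{G}_{m,k}$ acts faithfully on $\mathbb{P}^1_k$. Moreover, this action can be chosen so that, for every $n\ge0$, it preserves $\mathcal{D}_n$ and $\mathcal{H}_{0,n}$; consequently, for all $n\ge0$ and $l\ge1$, the induced semi-direct products $\mathcal{D}_n\rtimes\mu_{2^l,k}$ and $\mathcal{H}_{0,n}\rtimes\mu_{2^l,k}$ act faithfully on $\mathbb{P}^1_k$.
   Context: Let $\alpha_{2,k}$ act on $\mathbb{G}_{a,k}$ by group automorphisms via $a\cdot b=b+ab^2$ and let $\mathcal{E}=\mathbb{G}_{a,k}\rtimes\alpha_{2,k}$. For $n\ge0$, $\mathcal{D}_n=\alpha_{2^n,k}\rtimes\alpha_{2,k}\subseteq\mathcal{E}$, where $\alpha_{2^n,k}=\operatorname{Spec}k[T]/(T^{2^n})\subseteq\mathbb{G}_{a,k}$, and $\mathcal{H}_{0,n}=\alpha_{2^n,k}\rtimes\{0\}\subseteq\mathcal{D}_n$ (for $n\ge1$). $\mu_{2^l,k}\subseteq\mathbb{G}_{m,k}$ acts by restriction. *)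

(* Defs.v *)
(* Group schemes over k are encoded by their functors of
   points on commutative k-algebras. *)
From HB Require Import structures.
From mathcomp Require Import all_boot all_order all_algebra.
Set Implicit Arguments. Unset Strict Implicit. Unset Printing Implicit Defensive.
Import Order.TTheory GRing.Theory Num.Theory.
Local Open Scope ring_scope.

Section GroupSchemes.
Variable k : fieldType.

Definition gm_unit (A : comAlgType k) (u : A) : Prop := exists v : A, u * v = 1.

(* points of E(A) = G_a(A) x alpha_2(A) are pairs (b, a) with a^2 = 0 *)
Definition inE (A : comAlgType k) (x : A * A) : Prop := x.2 ^+ 2 = 0.

Definition inD (n : nat) (A : comAlgType k) (x : A * A) : Prop :=
  x.1 ^+ (2 ^ n) = 0 /\ x.2 ^+ 2 = 0.

Definition inH (n : nat) (A : comAlgType k) (x : A * A) : Prop :=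
  x.1 ^+ (2 ^ n) = 0 /\ x.2 = 0.

Definition in_mu (l : nat) (A : comAlgType k) (u : A) : Prop := u ^+ (2 ^ l) = 1.

(* group law of E = G_a x| alpha_2 with a . b = b + a b^2:
   (b, a) (b', a') = (b + a . b', a + a') *)
Definition E_mul (A : comAlgType k) (x y : A * A) : A * A :=
  (x.1 + (y.1 + x.2 * y.1 ^+ 2), x.2 + y.2).

(* a family of maps G_m(A) x E(A) -> E(A), one for each k-algebra A *)
Definition gm_map := forall A : comAlgType k, A -> A * A -> A * A.

Definition is_Gm_action_by_aut (rho : gm_map) : Prop :=
  [/\ (forall (A B : comAlgType k) (f : {lrmorphism A -> B}) (u : A) (x : A * A),
          gm_unit u -> inE x ->
          rho B (f u) (f x.1, f x.2) = (f (rho A u x).1, f (rho A u x).2)),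
      (forall (A : comAlgType k) (u : A) (x : A * A),
          gm_unit u -> inE x -> inE (rho A u x)),
      (forall (A : comAlgType k) (x : A * A), inE x -> rho A 1 x = x),
      (forall (A : comAlgType k) (u v : A) (x : A * A),
          gm_unit u -> gm_unit v -> inE x -> rho A (u * v) x = rho A u (rho A v x)) &
      (forall (A : comAlgType k) (u : A) (x y : A * A),
          gm_unit u -> inE x -> inE y ->
          rho A u (E_mul x y) = E_mul (rho A u x) (rho A u y))].

Definition nontrivial_action (rho : gm_map) : Prop :=
  exists (A : comAlgType k) (u : A) (x : A * A), [/\ gm_unit u, inE x & rho A u x <> x].

Definition SD_mul (rho : gm_map) (A : comAlgType k) (g h : (A * A) * A) : (A * A) * A :=
  (E_mul g.1 (rho A g.2 h.1), g.2 * h.2).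

Definition SD_map (A B : comAlgType k) (f : {lrmorphism A -> B}) (g : (A * A) * A)
  : (B * B) * B := ((f g.1.1, f g.1.2), f g.2).

(* M and N define the same point of PGL_2(A) = GL_2(A) / A^x *)
Definition proj_eq (A : comAlgType k) (M N : 'M[A]_2) : Prop :=
  exists c : A, gm_unit c /\ M = c *: N.

(* a family of maps from the semidirect product to 2x2 matrices, standing
   for a morphism to PGL_2 = Aut(P^1) *)
Definition pgl_map := forall A : comAlgType k, (A * A) * A -> 'M[A]_2.

(* phi is a faithful action on P^1 (i.e. a monomorphism of group functors
   into PGL_2 = Aut(P^1_k)) of the subgroup functor S of E x|_rho G_m *)
Definition faithful_P1_action (rho : gm_map)
    (S : forall A : comAlgType k, (A * A) * A -> Prop) (phi : pgl_map) : Prop :=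
  [/\ (forall (A : comAlgType k) g, S A g -> exists N : 'M[A]_2, phi A g *m N = 1%:M),
      (forall (A : comAlgType k) g h, S A g -> S A h ->
          proj_eq (phi A (SD_mul rho g h)) (phi A g *m phi A h)),
      (forall (A B : comAlgType k) (f : {lrmorphism A -> B}) g, S A g ->
          proj_eq (map_mx f (phi A g)) (phi B (SD_map f g))) &
      (forall (A : comAlgType k) g h, S A g -> S A h ->
          proj_eq (phi A g) (phi A h) -> g = h)].

Definition S_full (A : comAlgType k) (g : (A * A) * A) : Prop :=
  inE g.1 /\ gm_unit g.2.
Definition S_D (n l : nat) (A : comAlgType k) (g : (A * A) * A) : Prop :=
  inD n g.1 /\ in_mu l g.2.
Definition S_H (n l : nat) (A : comAlgType k) (g : (A * A) * A) : Prop :=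
  inH n g.1 /\ in_mu l g.2.

End GroupSchemes.

(* Main.v *)
Require Import Defs.
From HB Require Import structures.
From mathcomp Require Import all_boot all_order all_algebra.
From mathcomp Require Import ring.
From Stdlib Require Import ClassicalEpsilon.
Set Implicit Arguments. Unset Strict Implicit. Unset Printing Implicit Defensive.
Import Order.TTheory GRing.Theory Num.Theory.
Local Open Scope ring_scope.

Section Aux.
Variable k : fieldType.

Definition ginv (A : comAlgType k) (u : A) : A :=
  epsilon (inhabits 0) (fun v => u * v = 1).

Lemma ginvP (A : comAlgType k) (u : A) : gm_unit u -> u * ginv u = 1.
Proof. move=> [v hv]. exact: (epsilon_spec (inhabits 0) (fun v => u * v = 1) (ex_intro _ v hv)). Qed.

Lemma ginv_uniq (A : comAlgType k) (u v : A) : u * v = 1 -> ginv u = v.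
Proof.
move=> hv; have hu := ginvP (ex_intro _ v hv).
by rewrite -[ginv u]mul1r -hv mulrAC hu mul1r.
Qed.

Definition rho : gm_map k := fun A u x => (u * x.1, ginv u * x.2).

Lemma char2 (hk : 2%N \in [pchar k]) (A : comAlgType k) : (2 : A) = 0.
Proof.
have h : (2%:R : k) = 0 by apply/eqP; case/andP: hk.
by rewrite -[(2:A)](rmorph_nat (in_alg A)) h rmorph0.
Qed.

Definition mk (A : comAlgType k) (p q r s : A) : 'M[A]_2 :=
  \matrix_(i < 2, j < 2) if (i : nat) == 0%N then (if (j : nat) == 0%N then p else q)
                         else (if (j : nat) == 0%N then r else s).

Ltac mxcase := apply/matrixP; case=> [[|[|?]] ?] //; case=> [[|[|?]] ?] //;
  rewrite !mxE ?big_ord_recl ?big_ord0 ?mxE /= ?addr0.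

Lemma mk_mul (A : comAlgType k) (p q r s p' q' r' s' : A) :
  mk p q r s *m mk p' q' r' s' = mk (p * p' + q * r') (p * q' + q * s') (r * p' + s * r') (r * q' + s * s').
Proof. by mxcase. Qed.

Lemma mk_scale (A : comAlgType k) (c p q r s : A) : c *: mk p q r s = mk (c * p) (c * q) (c * r) (c * s).
Proof. by mxcase. Qed.

Lemma mk1 (A : comAlgType k) : (1%:M : 'M[A]_2) = mk 1 0 0 1.
Proof. by mxcase. Qed.

Lemma mk_map (A B : comAlgType k) (f : {lrmorphism A -> B}) (p q r s : A) :
  map_mx f (mk p q r s) = mk (f p) (f q) (f r) (f s).
Proof. by mxcase. Qed.

Lemma mk_inj (A : comAlgType k) (p q r s p' q' r' s' : A) :
  mk p q r s = mk p' q' r' s' -> [/\ p = p', q = q', r = r' & s = s'].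
Proof.
move=> /matrixP h.
have e := h 0 0; have e1 := h 0 1; have e2 := h 1 0; have e3 := h 1 1.
by rewrite !mxE /= in e e1 e2 e3.
Qed.

Definition phi : pgl_map k := fun A g =>
  mk (g.2 * (1 + g.1.2 * g.1.1)) g.1.1 (g.2 * g.1.2) 1.

Lemma faithful_gen (hk : 2%N \in [pchar k]) (S : forall A : comAlgType k, (A * A) * A -> Prop) :
  (forall A g, S A g -> g.1.2 ^+ 2 = 0 /\ gm_unit g.2) -> faithful_P1_action rho S phi.
Proof.
move=> hS; split.
- move=> A [[b a] t] /hS [/= ha ht].
  have hw := ginvP ht; set w := ginv t in hw.
  exists (mk w (- w * b) (- a) (1 + a * b)).
  rewrite /phi /= mk_mul mk1; congr mk; ring: hw.
- move=> A [[b a] t] [[b' a'] s] /hS [/= ha ht] /hS [/= ha' hs].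
  have h2 := char2 hk A.
  have hw := ginvP ht; set w := ginv t in hw.
  exists (1 + t * a * b'); split.
    by exists (1 + t * a * b'); ring: ha h2.
  rewrite /phi /SD_mul /rho /E_mul /= -/w mk_mul mk_scale; congr mk; ring: ha ha' hw h2.
- move=> A B f [[b a] t] _; exists 1; split; first by exists 1; rewrite mulr1.
  rewrite scale1r /phi mk_map /SD_map /=.
  by rewrite !rmorphM !rmorphD !rmorph1 !rmorphM.
- move=> A [[b a] t] [[b' a'] s] /hS [/= ha ht] /hS [/= ha' hs] [c [_]].
  rewrite /phi /= mk_scale => /mk_inj [e1 e2 e3 e4].
  have c1 : c = 1 by rewrite -[c]mulr1 -e4.
  rewrite c1 !mul1r in e1 e2 e3.
  have ets : t = s.
    have -> : t = t * (1 + a * b) - t * a * b by ring.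
    by rewrite e1 e3 e2; ring.
  subst s b'.
  have hw := ginvP ht; set w := ginv t in hw.
  have -> : a = w * (t * a) by rewrite mulrA (mulrC w) hw mul1r.
  by rewrite e3 mulrA (mulrC w) hw mul1r.
Qed.

Lemma nontriv : nontrivial_action rho.
Proof.
pose h : {poly k} := 'X^2.
have hX2 : ('qX : {poly %/ h}) ^+ 2 = 0.
  rewrite /qpolyX -rmorphXn; apply: val_inj => /=.
  rewrite /h mk_monic_Xn /=; apply: Pdiv.RingMonic.rmodpp; exact: monicXn.
exists {poly %/ h}, (1 + 'qX), (1, 0); split.
- by exists (1 - 'qX); ring: hX2.
- by rewrite /Defs.inE /= expr2 mulr0.
- move=> E; have e := congr1 fst E.
  change ((1 + 'qX) * 1 = (1 : {poly %/ h})) in e; rewrite mulr1 in e.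
  have hq : ('qX : {poly %/ h}) = 0 by rewrite -(addKr 1 'qX) e addNr.
  have hv : val ('qX : {poly %/ h}) = 'X.
    by apply: qpolyXE; rewrite /h ?size_polyXn ?monicXn.
  by move: (polyX_eq0 k); rewrite -hv hq eqxx.
Qed.

End Aux.

Theorem mainTheorem10 (k : fieldType) (hk : 2%N \in [pchar k]) :
  exists rho : gm_map k,
    [/\ is_Gm_action_by_aut rho,
        nontrivial_action rho,
        (exists phi : pgl_map k, faithful_P1_action rho (@S_full k) phi),
        ((forall (n : nat) (A : comAlgType k) (u : A) (x : A * A),
            gm_unit u -> inD n x -> inD n (rho A u x)) /\
        (forall (n : nat) (A : comAlgType k) (u : A) (x : A * A),
            (0 < n)%N -> gm_unit u -> inH n x -> inH n (rho A u x))) &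
        (forall n l : nat, (0 < l)%N ->
            (exists phi : pgl_map k, faithful_P1_action rho (@S_D k n l) phi) /\
            ((0 < n)%N -> exists phi : pgl_map k, faithful_P1_action rho (@S_H k n l) phi))].
Proof.
exists (@rho k); split.
- split.
  + move=> A B f u [b a] hu _; rewrite /rho /=.
    have -> : ginv (f u) = f (ginv u).
      by apply: ginv_uniq; rewrite -rmorphM ginvP // rmorph1.
    by rewrite !rmorphM.
  + move=> A u [b a] hu; rewrite /Defs.inE /rho /= => ha; ring: ha.
  + move=> A [b a] _; rewrite /rho (ginv_uniq (mulr1 (1 : A))) !mul1r //.
  + move=> A u v [b a] hu hv _; rewrite /rho /=.
    have -> : ginv (u * v) = ginv u * ginv v.
      apply: ginv_uniq; have h1 := ginvP hu; have h2 := ginvP hv; ring: h1 h2.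
    by rewrite !mulrA.
  + move=> A u [b a] [b' a'] hu _ _; rewrite /rho /E_mul /=.
    have hw := ginvP hu; congr pair; ring: hw.
- exact: nontriv.
- exists (@phi k); apply: faithful_gen => // A g [ha hu]; split => //.
- split.
  + move=> n A u [b a] hu [/= h1 h2]; rewrite /inD /rho /=; split.
      by rewrite exprMn h1 mulr0.
    ring: h2.
  + move=> n A u [b a] _ hu [/= h1 h2]; rewrite /inH /rho /=; split.
      by rewrite exprMn h1 mulr0.
    by rewrite h2 mulr0.
- move=> n l hl; split.
  + exists (@phi k); apply: faithful_gen => // A g [[_ ha] hu]; split => //.
    exists (g.2 ^+ (2 ^ l).-1); rewrite -exprS prednK ?expn_gt0 //.
  + move=> _; exists (@phi k); apply: faithful_gen => // A g [[_ ha] hu]; split.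
      by rewrite ha expr2 mulr0.
    exists (g.2 ^+ (2 ^ l).-1); rewrite -exprS prednK ?expn_gt0 //.
Qed.
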